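(* Fix an integer $c$ and a real number $\alpha>0$. Then for all sufficiently large $n$ the following holds, with $h=\left\lfloor\frac{n+c}{12e\alpha}\right\rfloor$ and $w=\frac{n+c}{\alpha}$: if $v_1<\cdots<v_n$ are positive real numbers satisfying $v_{i+h}\ge w v_i$ for every $1\le i\le n-h$, then $\mathrm{ML}(v_1,\ldots,v_n)>\frac{\alpha}{n+c}$.
   Context: For a real number $x$, $\Vert x\Vert$ denotes the distance from $x$ to the nearest integer. For positive real numbers $v_1,\ldots,v_n$, the maximum loneliness is $\mathrm{ML}(v_1,\ldots,v_n)=\sup_{t\in\mathbb{R}}\min_{1\le i\le n}\Vert t v_i\Vert$. Here $e$ is the base of the natural logarithm. *)

(* Defs.v *)
From Stdlib Require Import Reals Lra Lia ZArith.
From Coquelicot Require Import Coquelicot.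
Open Scope R_scope.

Definition dist_int (x : R) : R :=
  Rmin (x - IZR (Int_part x)) (IZR (Int_part x) + 1 - x).

Fixpoint min_dist (v : nat -> R) (t : R) (n : nat) : R :=
  match n with
  | O => 1 (* unused default; n >= 1 in all uses *)
  | S O => dist_int (t * v 1%nat)
  | S m => Rmin (min_dist v t m) (dist_int (t * v n))
  end.

Definition ML (v : nat -> R) (n : nat) : Rbar :=
  Lub_Rbar (fun y => exists t : R, y = min_dist v t n).

(* Main.v *)
Require Import Defs.
From Stdlib Require Import Reals Lra Lia ZArith Bool.
From Coquelicot Require Import Coquelicot.
Open Scope R_scope.

Fixpoint cnt (P : nat -> bool) (N : nat) : nat :=
  match N with O => O | S N' => (cnt P N' + (if P N' then 1 else 0))%nat end.

Lemma cnt_ext P Q N : (forall l, (l < N)%nat -> P l = Q l) -> cnt P N = cnt Q N.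
Proof. induction N; simpl; intros H; auto. rewrite IHN by (intros; apply H; lia). rewrite H by lia. auto. Qed.

Lemma cnt_mono P Q N : (forall l, (l < N)%nat -> P l = true -> Q l = true) -> (cnt P N <= cnt Q N)%nat.
Proof. induction N; simpl; intros H; auto. assert (IH := IHN (fun l Hl => H l ltac:(lia))).
  specialize (H N ltac:(lia)). destruct (P N), (Q N); try lia; specialize (H eq_refl); discriminate. Qed.

Lemma cnt_or P Q R N : (forall l, (l < N)%nat -> P l = true -> Q l = true \/ R l = true) -> (cnt P N <= cnt Q N + cnt R N)%nat.
Proof. induction N; simpl; intros H; auto. assert (IH := IHN (fun l Hl => H l ltac:(lia))).
  specialize (H N ltac:(lia)). destruct (P N), (Q N), (R N); try lia; destruct (H eq_refl); discriminate. Qed.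

Lemma cnt_false P N : (forall l, (l < N)%nat -> P l = false) -> cnt P N = O.
Proof. induction N; simpl; intros H; auto. rewrite IHN by (intros; apply H; lia). rewrite H by lia. auto. Qed.

Lemma cnt_true P N : (forall l, (l < N)%nat -> P l = true) -> cnt P N = N.
Proof. induction N; simpl; intros H; auto. rewrite IHN by (intros; apply H; lia). rewrite H by lia. lia. Qed.

Lemma cnt_le_N P N : (cnt P N <= N)%nat.
Proof. induction N; simpl; auto. destruct (P N); lia. Qed.

Lemma cnt_monoN P M N : (M <= N)%nat -> (cnt P M <= cnt P N)%nat.
Proof. induction 1; simpl; auto. lia. Qed.

Lemma cnt_split P a N : (a <= N)%nat -> cnt P N = (cnt P a + cnt (fun l => (a <=? l)%nat && P l) N)%nat.
Proof. induction 1.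
  - rewrite (cnt_false (fun l => _ && _)); [lia|]. intros l Hl. destruct (Nat.leb_spec a l); [lia|auto].
  - simpl. rewrite IHle. destruct (Nat.leb_spec a m); [|lia]. simpl. lia. Qed.

Lemma cnt_andsplit P Q N : cnt P N = (cnt (fun l => P l && Q l) N + cnt (fun l => P l && negb (Q l)) N)%nat.
Proof. induction N; simpl; auto. rewrite IHN. destruct (P N), (Q N); simpl; lia. Qed.

Definition Rleb (x y : R) : bool := if Rle_dec x y then true else false.
Lemma Rleb_true x y : Rleb x y = true <-> x <= y.
Proof. unfold Rleb; destruct (Rle_dec x y); split; intros; auto; try discriminate; lra. Qed.
Lemma Rleb_false x y : Rleb x y = false <-> y < x.
Proof. unfold Rleb; destruct (Rle_dec x y); split; intros; auto; try discriminate; lra. Qed.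

Lemma cnt_interval_aux y z b :
  INR (cnt (fun l => Rleb y (INR l) && Rleb (INR l) z) b) <= Rmax 0 (Rmin z (INR b - 1) - y + 1).
Proof.
  induction b.
  - simpl. unfold Rmax; destruct Rle_dec; lra.
  - cbn [cnt]. rewrite plus_INR, S_INR.
    destruct (Rleb y (INR b)) eqn:E1; destruct (Rleb (INR b) z) eqn:E2; simpl;
    try (apply Rleb_true in E1); try (apply Rleb_true in E2);
    try (apply Rleb_false in E1); try (apply Rleb_false in E2);
    revert IHb; unfold Rmax, Rmin; repeat destruct Rle_dec; intros; lra.
Qed.

Lemma cnt_interval y z b : y - 1 <= z ->
  INR (cnt (fun l => Rleb y (INR l) && Rleb (INR l) z) b) <= z - y + 1.
Proof. intros H. eapply Rle_trans; [apply cnt_interval_aux|]. unfold Rmax, Rmin; repeat destruct Rle_dec; lra. Qed.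

Lemma div_le_l y x s : 0 < s -> y <= x * s -> y / s <= x.
Proof. intros Hs H. unfold Rdiv. apply Rmult_le_reg_r with s; auto.
  rewrite Rmult_assoc, Rinv_l by lra. lra. Qed.
Lemma div_le_r y x s : 0 < s -> x * s <= y -> x <= y / s.
Proof. intros Hs H. unfold Rdiv. apply Rmult_le_reg_r with s; auto.
  rewrite Rmult_assoc, Rinv_l by lra. lra. Qed.

Section G.
Variables (s lo hi : R) (P : nat -> bool) (a b : nat).
Hypothesis Hs : 0 < s.
Hypothesis Hlh : 0 <= hi - lo < 1.
Hypothesis HP : forall l, P l = true -> exists r : Z, lo <= INR l * s - IZR r <= hi.
Hypothesis Hab : (a <= b)%nat.

Let f (R0 : Z) := cnt (fun l => (a <=? l)%nat && P l && Rleb (INR l * s - hi) (IZR R0)) b.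
Let C := (hi - lo) / s + 1.

Lemma G_step R0 : INR (f (R0 + 1)) <= INR (f R0) + C.
Proof.
  unfold f.
  eapply Rle_trans; [apply le_INR; apply cnt_or with (Q := fun l => (a <=? l)%nat && P l && Rleb (INR l * s - hi) (IZR R0))
    (R := fun l => Rleb ((IZR (R0+1) + lo)/s) (INR l) && Rleb (INR l) ((IZR (R0+1) + hi)/s))|].
  - intros l _ H. cbv beta in *. apply andb_prop in H as [H1 H2]. apply andb_prop in H1 as [H0 H1].
    apply Rleb_true in H2.
    destruct (Rle_dec (INR l * s - hi) (IZR R0)) as [Hle|Hlt].
    + left. rewrite H0, H1. simpl. apply Rleb_true; auto.
    + right. destruct (HP l H1) as [r Hr].
      assert (r1 : (R0 < r)%Z) by (apply lt_IZR; lra).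
      assert (r2 : (r < R0 + 2)%Z) by (apply lt_IZR; rewrite plus_IZR in *; simpl in *; lra).
      assert (r = R0 + 1)%Z by lia. subst r.
      apply andb_true_intro; split; apply Rleb_true.
      * apply div_le_l; auto; lra.
      * apply div_le_r; auto; lra.
  - rewrite plus_INR. apply Rplus_le_compat_l. unfold C.
    eapply Rle_trans; [apply cnt_interval|].
    + assert ((IZR (R0 + 1) + lo) / s <= (IZR (R0 + 1) + hi) / s).
      { unfold Rdiv. apply Rmult_le_compat_r. left; apply Rinv_0_lt_compat; auto. lra. }
      lra.
    + right. field. lra.
Qed.

Lemma G_iter R0 k : INR (f (R0 + Z.of_nat k)) <= INR (f R0) + INR k * C.
Proof.
  induction k.
  - simpl. rewrite Z.add_0_r. lra.
  - rewrite Nat2Z.inj_succ, <- Z.add_1_r, Z.add_assoc.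
    eapply Rle_trans; [apply G_step|]. rewrite S_INR. lra.
Qed.

Lemma countG : INR (cnt (fun l => (a <=? l)%nat && P l) b) <= ((INR b - INR a) * s + 3) * C.
Proof.
  set (R0 := (up (INR a * s - hi) - 2)%Z).
  set (R1 := up (INR b * s - hi)).
  destruct (archimed (INR a * s - hi)) as [Ha1 Ha2].
  destruct (archimed (INR b * s - hi)) as [Hb1 Hb2].
  assert (Hab' : INR a <= INR b) by (apply le_INR; auto).
  assert (HaS : INR a * s <= INR b * s) by (apply Rmult_le_compat_r; lra).
  assert (HR : (0 <= R1 - R0)%Z).
  { apply le_IZR. unfold R0, R1. rewrite minus_IZR, minus_IZR. simpl. lra. }
  assert (E1 : f R0 = O).
  { unfold f. apply cnt_false. intros l Hl.
    destruct ((a <=? l)%nat) eqn:E; simpl; auto. destruct (P l); simpl; auto.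
    apply Rleb_false. apply Nat.leb_le in E. apply le_INR in E.
    assert (INR a * s <= INR l * s) by (apply Rmult_le_compat_r; lra).
    unfold R0. rewrite minus_IZR. simpl. lra. }
  assert (E2 : f R1 = cnt (fun l => (a <=? l)%nat && P l) b).
  { unfold f. apply cnt_ext. intros l Hl.
    assert (Rleb (INR l * s - hi) (IZR R1) = true).
    { apply Rleb_true. apply lt_INR in Hl.
      assert (INR l * s <= INR b * s) by (apply Rmult_le_compat_r; lra). unfold R1. lra. }
    rewrite H. apply andb_true_r. }
  rewrite <- E2.
  assert (E3 : R1 = (R0 + Z.of_nat (Z.to_nat (R1 - R0)))%Z) by (rewrite Z2Nat.id; lia).
  rewrite E3. eapply Rle_trans; [apply G_iter|]. rewrite E1. simpl (INR 0).
  rewrite INR_IZR_INZ, Z2Nat.id by lia.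
  assert (HC : 0 <= C).
  { unfold C. assert (0 <= (hi - lo) / s). { unfold Rdiv. apply Rmult_le_pos. lra. left; apply Rinv_0_lt_compat; auto. } lra. }
  assert (IZR (R1 - R0) <= (INR b - INR a) * s + 3).
  { unfold R0, R1. rewrite !minus_IZR. simpl. lra. }
  nra.
Qed.
End G.

Definition trans (U : nat -> bool) (k : nat) : bool := negb (Bool.eqb (U k) (U (S k))).
Definition Tr (U : nat -> bool) (M : nat) : nat := cnt (trans U) (pred M).

Fixpoint rs (U : nat -> bool) (m : nat) : nat :=
  match m with O => O | S m' => if U m' then rs U m' else m end.

Lemma rs_le U m : (rs U m <= m)%nat.
Proof. induction m; simpl; auto. destruct (U m); lia. Qed.
Lemma rs_in U m l : (rs U m <= l < m)%nat -> U l = true.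
Proof. induction m; simpl; intros H; [lia|]. destruct (U m) eqn:E.
  - destruct (Nat.eq_dec l m); [subst; auto|]. apply IHm; lia.
  - lia. Qed.
Lemma rs_out U m : (0 < rs U m)%nat -> U (pred (rs U m)) = false.
Proof. induction m; simpl; intros H; [lia|]. destruct (U m) eqn:E; auto. Qed.

Lemma cnt_from a M : cnt (fun l => (a <=? l)%nat) M = (M - a)%nat.
Proof. induction M; cbn [cnt]; auto. rewrite IHM. destruct (Nat.leb_spec a M); lia. Qed.

Section Run.
Variables (U B : nat -> bool) (beta K : R) (N : nat).
Hypothesis Hbeta : 0 <= beta.
Hypothesis HK : 0 <= K.
Hypothesis HB : forall a b, (a <= b <= N)%nat ->
  INR (cnt (fun l => (a <=? l)%nat && B l) b) <= beta * (INR b - INR a) + K.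

Lemma run_aux M : (M <= N)%nat ->
  INR (cnt (fun l => U l && B l) M) <= beta * INR (cnt U M) + K * (1 + INR (Tr U M)).
Proof.
  induction M as [M IH] using (well_founded_induction lt_wf). intros HM.
  destruct M as [|M'].
  - simpl. assert (0 <= INR (Tr U 0)) by apply pos_INR. nra.
  - destruct (U M') eqn:EU.
    + set (a := rs U (S M')).
      assert (Ha : a = rs U M') by (unfold a; simpl; rewrite EU; auto).
      assert (HaM : (a <= M')%nat) by (rewrite Ha; apply rs_le).
      assert (Hin : forall l, (a <= l < S M')%nat -> U l = true).
      { intros l Hl. apply (rs_in U (S M')); unfold a in Hl; lia. }
      rewrite (cnt_split _ a (S M')) by lia.
      rewrite (cnt_split U a (S M')) by lia.
      rewrite (cnt_ext (fun l => (a <=? l)%nat && (U l && B l)) (fun l => (a <=? l)%nat && B l)).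
      2:{ intros l Hl. destruct (Nat.leb_spec a l); simpl; auto. try (rewrite ?Hin by lia; auto). }
      rewrite (cnt_ext (fun l => (a <=? l)%nat && U l) (fun l => (a <=? l)%nat)).
      2:{ intros l Hl. destruct (Nat.leb_spec a l); simpl; auto. }
      assert (Hc : cnt (fun l => (a <=? l)%nat) (S M') = (S M' - a)%nat).
      { apply cnt_from. }
      rewrite Hc. rewrite !plus_INR. rewrite minus_INR by lia.
      assert (HBa := HB a (S M') ltac:(lia)).
      assert (HTr0 : 0 <= INR (Tr U (S M'))) by apply pos_INR.
      destruct (Nat.eq_dec a 0) as [Ha0|Ha0].
      * rewrite Ha0 in *. simpl. simpl in HBa. nra.
      * assert (IHa := IH a ltac:(lia) ltac:(lia)).
        assert (HTr : (Tr U a + 1 <= Tr U (S M'))%nat).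
        { unfold Tr. simpl pred.
          assert (Hcs : cnt (trans U) (S (pred a)) = (cnt (trans U) (pred a) + 1)%nat).
          { assert (Hout : U (pred a) = false) by (unfold a; apply rs_out; fold a; lia).
            cbn [cnt]. unfold trans. replace (S (pred a)) with a by lia.
            rewrite Hout, (Hin a) by lia. simpl. lia. }
          rewrite <- Hcs. apply cnt_monoN. lia. }
        apply le_INR in HTr. rewrite plus_INR in HTr. simpl in HTr. nra.
    + assert (IHM := IH M' ltac:(lia) ltac:(lia)).
      simpl. rewrite EU. simpl. rewrite !Nat.add_0_r.
      assert (HTr : (Tr U M' <= Tr U (S M'))%nat) by (unfold Tr; apply cnt_monoN; simpl; lia).
      apply le_INR in HTr. nra.
Qed.
End Run.

Lemma dist_int_le x r : dist_int x <= Rabs (x - IZR r).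
Proof.
  unfold dist_int. destruct (base_Int_part x) as [H1 H2].
  set (f := Int_part x) in *.
  destruct (Z_le_gt_dec r f) as [Hr|Hr].
  - apply IZR_le in Hr. unfold Rmin; destruct Rle_dec; unfold Rabs; destruct Rcase_abs; lra.
  - assert (Hr' : (f + 1 <= r)%Z) by lia. apply IZR_le in Hr'. rewrite plus_IZR in Hr'.
    unfold Rmin; destruct Rle_dec; unfold Rabs; destruct Rcase_abs; lra.
Qed.

Lemma dist_int_small x d : dist_int x <= d -> exists r : Z, - d <= x - IZR r <= d.
Proof.
  unfold dist_int. destruct (base_Int_part x) as [H1 H2]. intros H.
  unfold Rmin in H. destruct Rle_dec.
  - exists (Int_part x). lra.
  - exists (Int_part x + 1)%Z. rewrite plus_IZR. lra.
Qed.

Section Comb.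
Variables (v : nat -> R) (delta eta : R) (N : nat).
Hypothesis Hd : 0 < delta.
Hypothesis He : 0 < eta.

Definition Bad (j k : nat) : bool := Rleb (dist_int (INR k * eta * v j)) delta.
Fixpoint Good (m : nat) (k : nat) : bool :=
  match m with O => true | S m' => Good m' k && negb (Bad (S m') k) end.

Lemma Good_mono m m' k : (m <= m')%nat -> Good m' k = true -> Good m k = true.
Proof. induction 1; simpl; auto. intros H'. apply andb_prop in H' as [H1 _]. auto. Qed.

Lemma bad_interval i a b : 0 < eta * v i -> 2 * delta < 1 -> (a <= b)%nat ->
  INR (cnt (fun l => (a <=? l)%nat && Bad i l) b) <=
  (2 * delta + eta * v i) * (INR b - INR a) + 3 * (2 * delta / (eta * v i) + 1).
Proof.
  intros Hs Hd2 Hab.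
  eapply Rle_trans; [apply (countG (eta * v i) (- delta) delta (Bad i) a b)|].
  - auto.
  - lra.
  - intros l Hl. unfold Bad in Hl. apply Rleb_true in Hl. apply dist_int_small in Hl as [r Hr].
    exists r. replace (INR l * (eta * v i)) with (INR l * eta * v i) by ring. lra.
  - auto.
  - right. set (s := eta * v i) in *. field. lra.
Qed.

Lemma trans_bad j : 0 < eta * v j < 1 ->
  INR (Tr (Bad j) N) <= 4 * (INR N * (eta * v j) + 3).
Proof.
  intros Hs. set (s := eta * v j) in *.
  assert (Hx : forall k, INR (S k) * eta * v j = INR k * eta * v j + s) by (intros; rewrite S_INR; unfold s; ring).
  unfold Tr. eapply Rle_trans; [apply le_INR; apply cnt_monoN with (N := N); lia|].
  eapply Rle_trans; [apply le_INR; apply cnt_or with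
     (Q := fun l => (0 <=? l)%nat && (Bad j l && negb (Bad j (S l))))
     (R := fun l => (0 <=? l)%nat && (negb (Bad j l) && Bad j (S l)))|].
  { intros l _ H. unfold trans in H. simpl.
    destruct (Bad j l), (Bad j (S l)); simpl in *; auto. }
  rewrite plus_INR.
  assert (H1 : INR (cnt (fun l => (0 <=? l)%nat && (Bad j l && negb (Bad j (S l)))) N) <= ((INR N - INR 0) * s + 3) * ((delta - (delta - s)) / s + 1)).
  { apply countG; auto; try lra; try lia.
    intros l Hl. apply andb_prop in Hl as [Hl1 Hl2]. apply negb_true_iff in Hl2.
    unfold Bad in *. apply Rleb_true in Hl1. apply Rleb_false in Hl2.
    apply dist_int_small in Hl1 as [r Hr]. exists r.
    assert (Hq := dist_int_le (INR (S l) * eta * v j) r). rewrite Hx in Hq, Hl2.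
    replace (INR l * s) with (INR l * eta * v j) by (unfold s; ring).
    revert Hq; unfold Rabs; destruct Rcase_abs; intros; lra. }
  assert (H2 : INR (cnt (fun l => (0 <=? l)%nat && (negb (Bad j l) && Bad j (S l))) N) <= ((INR N - INR 0) * s + 3) * ((- delta - (- delta - s)) / s + 1)).
  { apply countG; auto; try lra; try lia.
    intros l Hl. apply andb_prop in Hl as [Hl1 Hl2]. apply negb_true_iff in Hl1.
    unfold Bad in *. apply Rleb_true in Hl2. apply Rleb_false in Hl1.
    rewrite Hx in Hl2.
    apply dist_int_small in Hl2 as [r Hr]. exists r.
    assert (Hq := dist_int_le (INR l * eta * v j) r).
    replace (INR l * s) with (INR l * eta * v j) by (unfold s; ring).
    revert Hq; unfold Rabs; destruct Rcase_abs; intros; lra. }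
  replace ((delta - (delta - s)) / s + 1) with 2 in H1 by (field; lra).
  replace ((- delta - (- delta - s)) / s + 1) with 2 in H2 by (field; lra).
  simpl (INR 0) in *. lra.
Qed.

Lemma trans_good m V : (forall j, (1 <= j <= m)%nat -> 0 < eta * v j < 1 /\ v j <= V) ->
  INR (Tr (Good m) N) <= INR m * (4 * (INR N * (eta * V) + 3)).
Proof.
  induction m; intros Hv.
  - simpl. unfold Tr. rewrite cnt_false; [simpl; lra|]. intros; unfold trans; simpl; auto.
  - assert (IH := IHm ltac:(intros j Hj; apply Hv; lia)).
    assert (Hb := trans_bad (S m) ltac:(apply Hv; lia)).
    destruct (Hv (S m) ltac:(lia)) as [Hs HV].
    assert (Tr (Good (S m)) N <= Tr (Good m) N + Tr (Bad (S m)) N)%nat.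
    { unfold Tr. apply cnt_or. intros l _ H. unfold trans in *. simpl in *.
      destruct (Good m l), (Good m (S l)), (Bad (S m) l), (Bad (S m) (S l)); simpl in *; auto. }
    apply le_INR in H. rewrite plus_INR in H. rewrite S_INR.
    assert (INR N * (eta * v (S m)) <= INR N * (eta * V)).
    { apply Rmult_le_compat_l. apply pos_INR. apply Rmult_le_compat_l; lra. }
    lra.
Qed.

Definition mu (m : nat) : nat := cnt (Good m) N.

Lemma loss i' : INR (mu i') - INR (mu (S i')) = INR (cnt (fun k => Good i' k && Bad (S i') k) N).
Proof.
  unfold mu. rewrite (cnt_andsplit (Good i') (Bad (S i'))). rewrite plus_INR. simpl. lra.
Qed.

Lemma loss_bound i' m V : (m <= i')%nat -> 0 < eta * v (S i') -> 2 * delta < 1 ->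
  (forall j, (1 <= j <= m)%nat -> 0 < eta * v j < 1 /\ v j <= V) ->
  INR (mu i') - INR (mu (S i')) <=
  (2 * delta + eta * v (S i')) * INR (mu m) +
  3 * (2 * delta / (eta * v (S i')) + 1) * (1 + INR m * (4 * (INR N * (eta * V) + 3))).
Proof.
  intros Hm Hs Hd2 Hv. rewrite loss.
  eapply Rle_trans; [apply le_INR; apply cnt_mono with (Q := fun k => Good m k && Bad (S i') k)|].
  { intros l _ H. apply andb_prop in H as [H1 H2]. rewrite H2, (Good_mono m i' l Hm H1). auto. }
  assert (HK : 0 <= 3 * (2 * delta / (eta * v (S i')) + 1)).
  { assert (0 <= 2 * delta / (eta * v (S i'))) by (unfold Rdiv; apply Rmult_le_pos; [lra|left; apply Rinv_0_lt_compat; auto]). lra. }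
  eapply Rle_trans; [apply (run_aux (Good m) (Bad (S i')) (2 * delta + eta * v (S i')) (3 * (2 * delta / (eta * v (S i')) + 1)) N);
    try lra; try exact HK; try apply Nat.le_refl|].
  - intros a b Hab. eapply Rle_trans; [apply bad_interval; auto; lia|]. lra.
  - assert (Ht := trans_good m V Hv). unfold mu. nra.
Qed.
End Comb.

Lemma bernoulli q k : 0 <= q <= 1 -> 1 - INR k * q <= (1 - q) ^ k.
Proof. intros Hq. induction k.
  - simpl. lra.
  - rewrite S_INR. simpl. assert (0 <= INR k * q) by (apply Rmult_le_pos; [apply pos_INR|lra]).
    assert (0 <= (1 - q) ^ k) by (apply pow_le; lra). nra. Qed.

Lemma pow_decr x a b : 0 <= x <= 1 -> (a <= b)%nat -> x ^ b <= x ^ a.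
Proof. intros Hx. induction 1; [lra|]. simpl. assert (0 <= x ^ m) by (apply pow_le; lra). nra. Qed.

Lemma cnt_pos P N : (0 < cnt P N)%nat -> exists k, P k = true.
Proof. induction N; cbn [cnt]; intros H; [lia|]. destruct (P N) eqn:EP; eauto. apply IHN. lia. Qed.

Section Main.
Variables (v : nat -> R) (n h : nat) (delta eta : R) (N : nat) (c0 : R).
Let q := / (4 * INR h).
Hypothesis Hh : (1 <= h)%nat.
Hypothesis Hd : 0 < delta.
Hypothesis He : 0 < eta.
Hypothesis Hpos : forall j, (1 <= j <= n)%nat -> 0 < v j.
Hypothesis Hmono : forall j i, (1 <= j <= i)%nat -> (i <= n)%nat -> v j <= v i.
Hypothesis Hlac : forall j i, (1 <= j)%nat -> (j + 2 * h <= i)%nat -> (i <= n)%nat -> v j <= delta ^ 2 * v i.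
Hypothesis Hs : eta * v n <= delta / 3.
Hypothesis Hhd : 24 * INR h * delta <= 1.
Hypothesis Hc0 : 0 < c0.
Hypothesis Hc0n : c0 <= (1 - q) ^ n.
Hypothesis Hnd : 108 * INR n * delta ^ 2 <= c0.
Hypothesis HN : 27 * (12 * INR n + 1) <= INR N * eta * v 1 * c0.

Lemma q_facts : 0 < q /\ q <= 1 /\ INR (2 * h) * q = / 2 /\ 6 * delta <= q.
Proof.
  assert (H1 : 1 <= INR h) by (apply (le_INR 1); auto).
  unfold q. rewrite mult_INR. simpl (INR 2). repeat split.
  - apply Rinv_0_lt_compat; lra.
  - rewrite <- Rinv_1. apply Rinv_le_contravar; lra.
  - field. lra.
  - apply (Rmult_le_reg_r (4 * INR h)); [lra|]. rewrite Rinv_l by lra. nra.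
Qed.

Lemma mu0 : mu v delta eta N 0 = N.
Proof. unfold mu. apply cnt_true. auto. Qed.

Lemma key_step i' : (S i' <= n)%nat ->
  (forall k m, (m <= k)%nat -> (k <= i')%nat -> (1 - q) ^ (k - m) * INR (mu v delta eta N m) <= INR (mu v delta eta N k)) ->
  (1 - q) * INR (mu v delta eta N i') <= INR (mu v delta eta N (S i')).
Proof.
  intros Hi Hchain. destruct q_facts as (Hq0 & Hq1 & Hq2 & Hq3).
  set (m := (i' - 2 * h)%nat).
  assert (Hm : (m <= i')%nat) by (unfold m; lia).
  set (mi := INR (mu v delta eta N i')). set (mm := INR (mu v delta eta N m)).
  assert (Hmi : mm / 2 <= mi).
  { assert (H := Hchain i' m Hm (le_n _)). fold mm mi in H.
    assert (Hb := bernoulli q (i' - m) ltac:(lra)).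
    assert (INR (i' - m) <= INR (2 * h)) by (apply le_INR; unfold m; lia).
    assert (0 <= mm) by apply pos_INR.
    assert (INR (i' - m) * q <= INR (2 * h) * q) by (apply Rmult_le_compat_r; lra).
    assert (/ 2 <= (1 - q) ^ (i' - m)) by lra. nra. }
  assert (Hmm : c0 * INR N <= mm).
  { assert (H := Hchain m 0%nat ltac:(lia) Hm). rewrite mu0, Nat.sub_0_r in H. fold mm in H.
    assert (Hp := pow_decr (1 - q) m n ltac:(lra) ltac:(unfold m; lia)).
    assert (0 <= INR N) by apply pos_INR. nra. }
  assert (Hn1 : (1 <= n)%nat) by lia.
  set (vi := v (S i')).
  assert (Hvi : 0 < vi) by (apply Hpos; lia).
  assert (Hv1 : v 1 <= vi) by (apply Hmono; lia).
  assert (Hvn : vi <= v n) by (apply Hmono; lia).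
  assert (Hv10 : 0 < v 1) by (apply Hpos; lia).
  assert (Hh1 : 1 <= INR h) by (apply (le_INR 1); auto).
  assert (Hd1 : delta <= / 24) by (apply (Rmult_le_reg_l 24); [lra|]; rewrite Rinv_r by lra; nra).
  set (s := eta * vi).
  assert (Hs0 : 0 < s) by (unfold s; apply Rmult_lt_0_compat; lra).
  assert (Hsd : s <= delta / 3) by (unfold s; apply Rle_trans with (eta * v n); [apply Rmult_le_compat_l; lra|lra]).
  set (V := delta ^ 2 * vi).
  assert (Hv : forall j, (1 <= j <= m)%nat -> 0 < eta * v j < 1 /\ v j <= V).
  { intros j Hj. split; [split|].
    - apply Rmult_lt_0_compat; [lra|apply Hpos; unfold m in Hj; lia].
    - apply Rle_lt_trans with (eta * v n); [apply Rmult_le_compat_l; [lra|apply Hmono; unfold m in Hj; lia]|lra].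
    - unfold V, vi. apply Hlac; unfold m in Hj; lia. }
  assert (HL := loss_bound v delta eta N Hd He i' m V Hm Hs0 ltac:(lra) Hv).
  fold vi in HL. fold s in HL. fold mi mm in HL.
  set (r := delta / s) in *.
  assert (Hr1 : 1 <= r) by (unfold r; apply div_le_r; lra).
  assert (Hrs : r * s = delta) by (unfold r; field; lra).
  replace (2 * delta / s) with (2 * r) in HL by (unfold r; field; lra).
  assert (HmR : INR m <= INR n) by (apply le_INR; unfold m; lia).
  assert (HmR0 : 0 <= INR m) by apply pos_INR.
  assert (HN0 : 0 <= INR N) by apply pos_INR.
  assert (HetaV : eta * V = delta ^ 2 * s) by (unfold V, s; ring).
  rewrite HetaV in HL.
  assert (Hrv : r * (eta * v 1) <= delta).
  { rewrite <- Hrs. unfold s. apply Rmult_le_compat_l; [lra|]. apply Rmult_le_compat_l; lra. }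
  assert (T1 : 3 * (2 * r + 1) * (1 + 12 * INR m) <= delta / 3 * c0 * INR N).
  { assert (3 * (2 * r + 1) * (1 + 12 * INR m) <= 9 * r * (1 + 12 * INR n)) by nra.
    assert (9 * r * (12 * INR n + 1) <= r / 3 * (INR N * eta * v 1 * c0)) by nra.
    assert (r / 3 * (INR N * eta * v 1 * c0) = (r * (eta * v 1)) * (INR N * c0) / 3) by (field).
    assert ((r * (eta * v 1)) * (INR N * c0) <= delta * (INR N * c0)) by (apply Rmult_le_compat_r; [nra|lra]).
    nra. }
  assert (T2 : 3 * (2 * r + 1) * (INR m * (4 * (INR N * (delta ^ 2 * s)))) <= delta / 3 * c0 * INR N).
  { assert (E : 3 * (2 * r + 1) * (INR m * (4 * (INR N * (delta ^ 2 * s)))) <=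
               9 * r * (INR n * (4 * (INR N * (delta ^ 2 * s))))).
    { assert (HZ : 0 <= 4 * (INR N * (delta ^ 2 * s))) by (apply Rmult_le_pos; [lra|apply Rmult_le_pos; [lra|apply Rmult_le_pos; [nra|lra]]]).
      apply Rmult_le_compat; [lra|apply Rmult_le_pos; lra|lra|]. apply Rmult_le_compat_r; lra. }
    assert (E2 : 9 * r * (INR n * (4 * (INR N * (delta ^ 2 * s)))) = delta / 3 * (108 * INR n * delta ^ 2) * INR N).
    { replace (9 * r * (INR n * (4 * (INR N * (delta ^ 2 * s))))) with (36 * (r * s) * INR n * INR N * delta ^ 2) by ring.
      rewrite Hrs. field. }
    assert (delta / 3 * (108 * INR n * delta ^ 2) * INR N <= delta / 3 * c0 * INR N).
    { apply Rmult_le_compat_r; auto. apply Rmult_le_compat_l; lra. }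
    lra. }
  assert (HL2 : mi - INR (mu v delta eta N (S i')) <= 3 * delta * mm).
  { eapply Rle_trans; [exact HL|].
    replace (3 * (2 * r + 1) * (1 + INR m * (4 * (INR N * (delta ^ 2 * s) + 3))))
      with (3 * (2 * r + 1) * (1 + 12 * INR m) + 3 * (2 * r + 1) * (INR m * (4 * (INR N * (delta ^ 2 * s))))) by ring.
    assert (delta / 3 * c0 * INR N <= delta / 3 * mm) by (rewrite Rmult_assoc; apply Rmult_le_compat_l; lra).
    assert ((2 * delta + s) * mm <= (2 * delta + delta / 3) * mm) by (apply Rmult_le_compat_r; [apply pos_INR|lra]).
    lra. }
  assert (0 <= mi) by apply pos_INR.
  assert (6 * delta * mi <= q * mi) by (apply Rmult_le_compat_r; lra).
  assert (3 * delta * mm <= 6 * delta * mi) by nra.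
  assert ((1 - q) * mi = mi - q * mi) by ring.
  unfold mi in *. lra.
Qed.

Lemma chain i : (i <= n)%nat -> forall k m, (m <= k)%nat -> (k <= i)%nat ->
  (1 - q) ^ (k - m) * INR (mu v delta eta N m) <= INR (mu v delta eta N k).
Proof.
  destruct q_facts as (Hq0 & Hq1 & _ & _).
  induction i; intros Hi k m Hmk Hki.
  - assert (k = 0%nat) by lia. assert (m = 0%nat) by lia. subst. simpl. lra.
  - destruct (Nat.eq_dec k (S i)) as [->|Hk]; [|apply IHi; lia].
    destruct (Nat.eq_dec m (S i)) as [->|Hm].
    + rewrite Nat.sub_diag. simpl. lra.
    + assert (Hs1 := key_step i Hi (fun k m H1 H2 => IHi ltac:(lia) k m H1 H2)).
      assert (H2 := IHi ltac:(lia) i m ltac:(lia) (le_n _)).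
      replace (S i - m)%nat with (S (i - m)) by lia. simpl.
      assert (0 <= 1 - q) by lra. nra.
Qed.

Lemma final_good : (1 <= N)%nat -> exists k, Good v delta eta n k = true.
Proof.
  intros HN1.
  assert (H := chain n (le_n _) n 0 ltac:(lia) (le_n _)). rewrite mu0, Nat.sub_0_r in H.
  assert (1 <= INR N) by (apply (le_INR 1); auto).
  assert (c0 * INR N <= (1 - q) ^ n * INR N) by (apply Rmult_le_compat_r; lra).
  assert (c0 * 1 <= c0 * INR N) by (apply Rmult_le_compat_l; lra).
  assert (Hmu : 0 < INR (mu v delta eta N n)) by lra.
  unfold mu in Hmu. destruct (cnt (Good v delta eta n) N) eqn:E.
  - simpl in Hmu. lra.
  - apply (cnt_pos _ N). rewrite E. lia.
Qed.
End Main.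

Lemma Good_not_bad v delta eta n k j : Good v delta eta n k = true -> (1 <= j <= n)%nat -> Bad v delta eta j k = false.
Proof.
  induction n; intros H Hj; [lia|]. simpl in H. apply andb_prop in H as [H1 H2].
  destruct (Nat.eq_dec j (S n)) as [->|]. { apply negb_true_iff; auto. } apply IHn; auto; lia.
Qed.

Lemma min_dist_gt v t d n : (1 <= n)%nat -> (forall j, (1 <= j <= n)%nat -> d < dist_int (t * v j)) -> d < min_dist v t n.
Proof.
  induction n; intros Hn H; [lia|]. destruct n.
  - simpl. apply H; lia.
  - change (min_dist v t (S (S n))) with (Rmin (min_dist v t (S n)) (dist_int (t * v (S (S n))))).
    apply Rmin_glb_lt; [apply IHn; [lia|intros; apply H; lia]|apply H; lia].
Qed.

Lemma mono_of_inc v n : (forall i, (1 <= i)%nat -> (i < n)%nat -> v i < v (S i)) ->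
  forall j i, (1 <= j <= i)%nat -> (i <= n)%nat -> v j <= v i.
Proof.
  intros H j i Hji Hin. induction i; [lia|].
  destruct (Nat.eq_dec j (S i)) as [->|]; [lra|].
  assert (v j <= v i) by (apply IHi; lia). assert (v i < v (S i)) by (apply H; lia). lra.
Qed.

Theorem theorem12p7 (c : Z) (alpha : R) (Halpha : 0 < alpha) :
  exists N : nat, forall n : nat, (N <= n)%nat ->
    let h : nat := Z.to_nat (Int_part ((INR n + IZR c) / (12 * exp 1 * alpha))) in
    let w : R := (INR n + IZR c) / alpha in
    forall v : nat -> R,
      (forall i : nat, (1 <= i)%nat -> (i <= n)%nat -> 0 < v i) ->
      (forall i : nat, (1 <= i)%nat -> (i < n)%nat -> v i < v (S i)) ->
      (forall i : nat, (1 <= i)%nat -> (i + h <= n)%nat -> v (i + h)%nat >= w * v i) ->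
      Rbar_lt (Finite (alpha / (INR n + IZR c))) (ML v n).
Proof.
  assert (He2 : 2 < exp 1) by (assert (H := exp_ineq1 1 ltac:(lra)); lra).
  set (A := 12 * exp 1 * alpha).
  assert (HA : 0 < A) by (unfold A; nra).
  set (K0 := Z.to_nat (up A)).
  destruct (archimed A) as [HK0a _].
  assert (HK0 : A <= INR K0) by (unfold K0; rewrite INR_IZR_INZ, Z2Nat.id; [lra|]; apply le_IZR; lra).
  set (c0 := (/ 2) ^ K0).
  assert (Hc0 : 0 < c0) by (unfold c0; apply pow_lt; lra).
  set (Mth := 2 * A + 2 * Rabs (IZR c) + 432 * alpha ^ 2 / c0 + 1).
  assert (HMth : 0 < Mth).
  { assert (0 <= 432 * alpha ^ 2 / c0) by (unfold Rdiv; apply Rmult_le_pos; [nra|left; apply Rinv_0_lt_compat; auto]).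
    assert (0 <= Rabs (IZR c)) by apply Rabs_pos. unfold Mth; lra. }
  exists (Z.to_nat (up Mth)).
  intros n Hn h w v Hpos Hinc Hlac0.
  destruct (archimed Mth) as [HM1 _].
  assert (Hn' : Mth <= INR n).
  { apply le_INR in Hn. rewrite INR_IZR_INZ, Z2Nat.id in Hn; [lra|]. apply le_IZR; lra. }
  assert (Hca : - Rabs (IZR c) <= IZR c) by (unfold Rabs; destruct Rcase_abs; lra).
  assert (Ht0 : 0 <= 432 * alpha ^ 2 / c0) by (unfold Rdiv; apply Rmult_le_pos; [nra|left; apply Rinv_0_lt_compat; auto]).
  assert (Hcabs : 0 <= Rabs (IZR c)) by apply Rabs_pos.
  set (X := INR n + IZR c) in *.
  assert (HXdef : X = INR n + IZR c) by reflexivity.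
  assert (HXA : A <= X) by (unfold Mth in Hn'; lra).
  assert (HX0 : 0 < X) by lra.
  assert (HXn : INR n / 2 <= X) by (unfold Mth in Hn'; lra).
  assert (Hn1 : (1 <= n)%nat) by (apply INR_le; simpl; unfold Mth in Hn'; lra).
  set (ip := Int_part (X / A)) in *.
  destruct (base_Int_part (X / A)) as [Hip1 Hip2]. fold ip in Hip1, Hip2.
  assert (HXA1 : 1 <= X / A) by (apply div_le_r; lra).
  assert (Hip0 : (1 <= ip)%Z) by (assert (0 < ip)%Z by (apply lt_IZR; lra); lia).
  assert (Hih : INR h = IZR ip) by (unfold h; rewrite INR_IZR_INZ, Z2Nat.id; [auto|lia]).
  assert (Hh1 : (1 <= h)%nat) by (unfold h; lia).
  set (delta := alpha / X).
  assert (Hd : 0 < delta) by (unfold delta; apply Rdiv_lt_0_compat; lra).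
  assert (Hw : w = X / alpha) by reflexivity.
  assert (Hwd : w * delta = 1) by (rewrite Hw; unfold delta; field; lra).
  assert (Hw0 : 0 < w) by (rewrite Hw; apply Rdiv_lt_0_compat; lra).
  assert (Hmono := mono_of_inc v n Hinc).
  assert (Hhd : 24 * INR h * delta <= 1).
  { assert (H1 : 24 * INR h * delta <= 24 * (X / A) * delta) by (apply Rmult_le_compat_r; lra).
    assert (H2 : 24 * (X / A) * delta = 2 / exp 1) by (unfold delta, A; field; repeat split; lra).
    assert (H3 : 2 / exp 1 <= 1) by (apply div_le_l; lra). lra. }
  assert (Hlac : forall j i, (1 <= j)%nat -> (j + 2 * h <= i)%nat -> (i <= n)%nat -> v j <= delta ^ 2 * v i).
  { intros j i Hj Hji Hi.
    assert (E1 := Hlac0 j Hj ltac:(lia)).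
    assert (E2 := Hlac0 (j + h)%nat ltac:(lia) ltac:(lia)).
    assert (E3 : v (j + h + h)%nat <= v i) by (apply Hmono; lia).
    assert (Hvj : 0 < v j) by (apply Hpos; lia).
    replace (v j) with (delta ^ 2 * (w * (w * v j))) by (simpl; replace (delta * (delta * 1) * (w * (w * v j))) with ((w * delta) * (w * delta) * v j) by ring; rewrite Hwd; ring).
    apply Rmult_le_compat_l; [nra|].
    assert (w * (w * v j) <= w * v (j + h)%nat) by (apply Rmult_le_compat_l; lra). lra. }
  set (q := / (4 * INR h)).
  assert (Hh1R : 1 <= INR h) by (apply (le_INR 1); auto).
  assert (Hq0 : 0 < q) by (unfold q; apply Rinv_0_lt_compat; lra).
  assert (Hq1 : q <= 1) by (unfold q; rewrite <- Rinv_1; apply Rinv_le_contravar; lra).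
  assert (Hq2 : INR (2 * h) * q = / 2) by (unfold q; rewrite mult_INR; simpl; field; lra).
  assert (Hc0n : c0 <= (1 - q) ^ n).
  { assert (Hn2 : (n <= 2 * h * K0)%nat).
    { apply INR_le. rewrite !mult_INR. simpl (INR 2).
      assert (HK00 : 0 <= A) by lra.
      assert (INR h * INR K0 >= (X / A - 1) * A).
      { apply Rle_ge. apply Rmult_le_compat; lra. }
      assert ((X / A - 1) * A = X - A) by (field; lra).
      unfold X, Mth in *. lra. }
    eapply Rle_trans; [|apply pow_decr; [lra|exact Hn2]].
    rewrite pow_mult. unfold c0. apply pow_incr. split; [lra|].
    assert (Hb := bernoulli q (2 * h) ltac:(lra)). lra. }
  assert (Hnd : 108 * INR n * delta ^ 2 <= c0).
  { assert (Hnn : 432 * alpha ^ 2 / c0 <= INR n) by (unfold Mth in Hn'; lra).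
    assert (Hn0 : 0 < INR n) by (unfold Mth in Hn'; lra).
    assert (H1 : 432 * alpha ^ 2 <= c0 * INR n).
    { apply (Rmult_le_compat_l c0) in Hnn; [|lra]. replace (c0 * (432 * alpha ^ 2 / c0)) with (432 * alpha ^ 2) in Hnn by (field; lra). lra. }
    assert (H2 : INR n * INR n <= 4 * (X * X)) by nra.
    unfold delta. replace (108 * INR n * (alpha / X) ^ 2) with (108 * INR n * alpha ^ 2 / (X * X)) by (field; lra).
    apply div_le_l; [nra|]. nra. }
  assert (Hvn : 0 < v n) by (apply Hpos; lia).
  assert (Hv1 : 0 < v 1%nat) by (apply Hpos; lia).
  set (eta := delta / (3 * v n)).
  assert (He : 0 < eta) by (unfold eta; apply Rdiv_lt_0_compat; lra).
  assert (Hs : eta * v n <= delta / 3) by (unfold eta; right; field; lra).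
  set (Y := 27 * (12 * INR n + 1) / (eta * v 1%nat * c0)).
  assert (HY0 : 0 < eta * v 1%nat * c0) by (apply Rmult_lt_0_compat; [apply Rmult_lt_0_compat|]; lra).
  assert (HY : 0 < Y) by (unfold Y; apply Rdiv_lt_0_compat; [assert (0 <= INR n) by apply pos_INR; lra|lra]).
  set (NN := (Z.to_nat (up Y) + 1)%nat).
  destruct (archimed Y) as [HY1 _].
  assert (HNN : Y <= INR NN).
  { unfold NN. rewrite plus_INR, INR_IZR_INZ, Z2Nat.id; [simpl; lra|]. apply le_IZR; lra. }
  assert (HN : 27 * (12 * INR n + 1) <= INR NN * eta * v 1%nat * c0).
  { replace (27 * (12 * INR n + 1)) with (Y * (eta * v 1%nat * c0)) by (unfold Y; field; lra).
    replace (INR NN * eta * v 1%nat * c0) with (INR NN * (eta * v 1%nat * c0)) by ring.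
    apply Rmult_le_compat_r; lra. }
  destruct (final_good v n h delta eta NN c0 Hh1 Hd He (fun j Hj => Hpos j (proj1 Hj) (proj2 Hj)) Hmono Hlac Hs Hhd Hc0 Hc0n Hnd HN ltac:(unfold NN; lia)) as [k Hk].
  set (t := INR k * eta).
  apply Rbar_lt_le_trans with (Finite (min_dist v t n)).
  - simpl. apply min_dist_gt; auto. intros j Hj.
    assert (Hb := Good_not_bad v delta eta n k j Hk Hj). unfold Bad in Hb. apply Rleb_false in Hb.
    unfold t. exact Hb.
  - apply (Lub_Rbar_correct (fun y => exists t0 : R, y = min_dist v t0 n)). exists t. reflexivity.
Qed.
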